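(* Let $\xi=e^{i\pi/5}$, $\tau=\frac{1+\sqrt5}{2}$, $L(n)=\{\sum_{j=0}^9 n_j\xi^j: n_j\in\mathbb{N}_0,\ \sum_j n_j\le n\}\cap\mathbb{R}$ for $n\in\mathbb{N}$, $x\mapsto x'$ the automorphism $a+b\sqrt5\mapsto a-b\sqrt5$ of $\mathbb{Q}[\sqrt5]$, and $\Sigma([-n,n])=\{x\in\mathbb{Z}+\mathbb{Z}\tau: x'\in[-n,n]\}$. Then the minimal distance between distinct points of $L(n)$ is greater than or equal to the minimal distance between distinct points of $\Sigma([-n,n])$.
   Context: The minimal distance of a set $S\subset\mathbb{R}$ is $\inf\{|x-y|: x,y\in S,\ x\neq y\}$. *)

(* Defs.v *)
From Stdlib Require Import Reals.
From Coquelicot Require Import Coquelicot.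
Open Scope R_scope.

Definition xi : C := (cos (PI / 5), sin (PI / 5)).

Definition tau : R := (1 + sqrt 5) / 2.

(* Galois conjugation of Q[sqrt 5] on Z + Z tau:  (a + b tau)' = a + b tau',
   with tau' = (1 - sqrt 5)/2. *)
Definition tau' : R := (1 - sqrt 5) / 2.

Definition Lset (n : nat) (x : R) : Prop :=
  exists c : nat -> nat,
    sum_n (fun j => INR (c j)) 9 <= INR n /\
    sum_n (fun j => Cmult (RtoC (INR (c j))) (pow_n xi j)) 9 = RtoC x.

Definition Sigma (n : nat) (x : R) : Prop :=
  exists a b : Z,
    x = IZR a + IZR b * tau /\
    - INR n <= IZR a + IZR b * tau' <= INR n.

(* minimal distance: inf { |x - y| : x, y in S, x <> y } in Rbar
   (the infimum of the empty set is +oo) *)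
Definition min_dist (S : R -> Prop) : Rbar :=
  Glb_Rbar (fun d => exists x y, S x /\ S y /\ x <> y /\ d = Rabs (x - y)).

(* Main.v *)
Require Import Defs.
From Stdlib Require Import Reals Lra Lia Psatz ZArith.
From Coquelicot Require Import Coquelicot.
Open Scope R_scope.

Lemma cos_pi5 : cos (PI/5) = tau / 2.
Proof.
  set (th := PI/5).
  assert (H3 : cos (3*th) = - cos (2*th)).
  { replace (3*th) with (PI - 2*th) by (unfold th; field). apply Rtrigo_facts.cos_pi_minus. }
  assert (Hc3 : cos (3*th) = cos(2*th)*cos th - sin (2*th) * sin th).
  { replace (3*th) with (2*th+th) by ring. apply cos_plus. }
  rewrite cos_2a_cos, sin_2a in *.
  assert (Hs := sin2_cos2 th). unfold Rsqr in Hs.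
  assert (Hpos : 0 < cos th).
  { apply cos_gt_0; unfold th; pose proof PI_RGT_0; lra. }
  set (c := cos th) in *. set (s := sin th) in *.
  assert (Q : (c+1)*(4*c*c-2*c-1) = 0) by nra.
  assert (Q2 : 4*c*c-2*c-1 = 0).
  { destruct (Rmult_integral _ _ Q); [lra|auto]. }
  assert (S5 : sqrt 5 * sqrt 5 = 5) by (apply sqrt_sqrt; lra).
  assert (S5p : 0 <= sqrt 5) by apply sqrt_pos.
  unfold tau.
  assert ((4*c-1 - sqrt 5)*(4*c-1+sqrt 5) = 0) by nra.
  destruct (Rmult_integral _ _ H); [lra|].
  assert (sqrt 5 > 1). { nra. } lra.
Qed.

Lemma tau_sq : tau * tau = tau + 1.
Proof. unfold tau. assert (S5 : sqrt 5 * sqrt 5 = 5) by (apply sqrt_sqrt; lra). nra. Qed.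

Definition s5 := sin (PI/5).
Lemma s5_sq : s5 * s5 = (3 - tau)/4.
Proof. unfold s5. pose proof (sin2_cos2 (PI/5)). unfold Rsqr in H. rewrite cos_pi5 in H.
  pose proof tau_sq. nra. Qed.
Lemma s5_pos : 0 < s5.
Proof. unfold s5. apply sin_gt_0; pose proof PI_RGT_0; lra. Qed.

Lemma xi_eq : xi = (tau/2, s5).
Proof. unfold xi, s5. rewrite cos_pi5. reflexivity. Qed.

Lemma pow_step j : pow_n xi (S j) = Cmult xi (pow_n xi j).
Proof. reflexivity. Qed.

Lemma Cmult_pair a b c d : Cmult (a,b) (c,d) = (a*c - b*d, a*d + b*c).
Proof. reflexivity. Qed.

Ltac stepit H :=
  rewrite pow_step, H, xi_eq, Cmult_pair; pose proof tau_sq; pose proof s5_sq;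
  assert (s5*s5*tau = (3-tau)/4*tau) by (rewrite s5_sq; ring);
  assert (s5*(tau*tau) = s5*(tau+1)) by (rewrite tau_sq; ring);
  f_equal; nra.

Lemma p0 : pow_n xi 0 = (1, 0). Proof. reflexivity. Qed.
Lemma p1 : pow_n xi 1 = (tau/2, s5). Proof. stepit p0. Qed.
Lemma p2 : pow_n xi 2 = ((tau-1)/2, s5*tau). Proof. stepit p1. Qed.
Lemma p3 : pow_n xi 3 = ((1-tau)/2, s5*tau). Proof. stepit p2. Qed.
Lemma p4 : pow_n xi 4 = (-tau/2, s5). Proof. stepit p3. Qed.
Lemma p5 : pow_n xi 5 = (-1, 0). Proof. stepit p4. Qed.
Lemma p6 : pow_n xi 6 = (-tau/2, -s5). Proof. stepit p5. Qed.
Lemma p7 : pow_n xi 7 = ((1-tau)/2, -s5*tau). Proof. stepit p6. Qed.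
Lemma p8 : pow_n xi 8 = ((tau-1)/2, -s5*tau). Proof. stepit p7. Qed.
Lemma p9 : pow_n xi 9 = (tau/2, -s5). Proof. stepit p8. Qed.

Lemma desc : forall k : nat, forall m q : Z, (Z.abs q <= Z.of_nat k)%Z -> (m*m = 5*(q*q))%Z -> q = 0%Z.
Proof.
  induction k as [|k IH]; intros m q Hq Hm.
  - simpl in Hq. lia.
  - pose proof (Z.div_mod m 5 ltac:(lia)) as Hd.
    pose proof (Z.mod_pos_bound m 5 ltac:(lia)) as Hr.
    set (r := (m mod 5)%Z) in *. set (k' := (m / 5)%Z) in *.
    assert (Hr0 : r = 0%Z).
    { assert (E : (r*r = 5*(q*q - 5*k'*k' - 2*k'*r))%Z) by (rewrite Hd in Hm; lia).
      assert (r = 0 \/ r = 1 \/ r = 2 \/ r = 3 \/ r = 4)%Z as C by lia.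
      destruct C as [C|[C|[C|[C|C]]]]; rewrite C in E; lia. }
    rewrite Hr0 in Hd.
    assert (E2 : (q*q = 5*(k'*k'))%Z) by (rewrite Hd in Hm; lia).
    assert (Hk : k' = 0%Z).
    { apply (IH q k'); [|exact E2].
      pose proof (Z.abs_square k') as A1. pose proof (Z.abs_square q) as A2.
      pose proof (Z.abs_nonneg k'). pose proof (Z.abs_nonneg q).
      rewrite Nat2Z.inj_succ in Hq. nia. }
    rewrite Hk in E2. nia.
Qed.

Lemma tau_irr (P Q : Z) : IZR P + IZR Q * tau = 0 -> Q = 0%Z /\ P = 0%Z.
Proof.
  intros H. unfold tau in H.
  assert (S5 : sqrt 5 * sqrt 5 = 5) by (apply sqrt_sqrt; lra).
  assert (E : IZR ((2*P+Q)*(2*P+Q)) = IZR (5*(Q*Q))).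
  { rewrite !mult_IZR, !plus_IZR, !mult_IZR.
    assert (2*IZR P + IZR Q = - IZR Q * sqrt 5) by lra.
    replace (IZR 2) with 2 by reflexivity. replace (IZR 5) with 5 by reflexivity.
    rewrite H0. nra. }
  apply eq_IZR in E.
  assert (HQ : Q = 0%Z) by (apply (desc (Z.abs_nat Q) (2*P+Q) Q); [lia|exact E]).
  split; [exact HQ|]. subst Q. simpl in H. apply eq_IZR. lra.
Qed.

Lemma incl n x : Lset n x -> Sigma n x.
Proof.
  intros [c [H1 H2]].
  rewrite !sum_Sn, sum_O in H1. rewrite !sum_Sn, sum_O in H2.
  rewrite p0,p1,p2,p3,p4,p5,p6,p7,p8,p9 in H2.
  unfold plus in H1, H2. simpl in H1, H2.
  apply (f_equal fst) in H2 as Hre. apply (f_equal snd) in H2 as Him.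
  simpl in Hre, Him. clear H2.
  rewrite !INR_IZR_INZ in H1, Hre, Him.
  set (z0 := Z.of_nat (c 0%nat)) in *.
  set (z1 := Z.of_nat (c 1%nat)) in *.
  set (z2 := Z.of_nat (c 2%nat)) in *.
  set (z3 := Z.of_nat (c 3%nat)) in *.
  set (z4 := Z.of_nat (c 4%nat)) in *.
  set (z5 := Z.of_nat (c 5%nat)) in *.
  set (z6 := Z.of_nat (c 6%nat)) in *.
  set (z7 := Z.of_nat (c 7%nat)) in *.
  set (z8 := Z.of_nat (c 8%nat)) in *.
  set (z9 := Z.of_nat (c 9%nat)) in *.
  assert (G : forall z : Z, z = Z.of_nat (Z.to_nat z) -> 0 <= IZR z).
  { intros z Hz. rewrite Hz, <- INR_IZR_INZ. apply pos_INR. }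
  assert (P0 : 0 <= IZR z0) by (apply G; unfold z0; lia).
  assert (P1 : 0 <= IZR z1) by (apply G; unfold z1; lia).
  assert (P2 : 0 <= IZR z2) by (apply G; unfold z2; lia).
  assert (P3 : 0 <= IZR z3) by (apply G; unfold z3; lia).
  assert (P4 : 0 <= IZR z4) by (apply G; unfold z4; lia).
  assert (P5 : 0 <= IZR z5) by (apply G; unfold z5; lia).
  assert (P6 : 0 <= IZR z6) by (apply G; unfold z6; lia).
  assert (P7 : 0 <= IZR z7) by (apply G; unfold z7; lia).
  assert (P8 : 0 <= IZR z8) by (apply G; unfold z8; lia).
  assert (P9 : 0 <= IZR z9) by (apply G; unfold z9; lia).
  clearbody z0 z1 z2 z3 z4 z5 z6 z7 z8 z9. clear G.
  assert (HAB : IZR (z1+z4-z6-z9) + IZR (z2+z3-z7-z8) * tau = 0).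
  { pose proof s5_pos.
    assert (s5 * (IZR (z1+z4-z6-z9) + IZR (z2+z3-z7-z8) * tau) = 0).
    { repeat (rewrite minus_IZR || rewrite plus_IZR). rewrite <- Him. ring. }
    destruct (Rmult_integral _ _ H0); [lra|auto]. }
  apply tau_irr in HAB. destruct HAB as [HB HA].
  apply (f_equal IZR) in HA. apply (f_equal IZR) in HB.
  rewrite !minus_IZR, !plus_IZR in HA, HB.
  exists (z0 - z5 - z8 + z3)%Z, (z9 - z4 + z8 - z3)%Z.
  repeat (rewrite minus_IZR || rewrite plus_IZR).
  assert (S5 : sqrt 5 * sqrt 5 = 5) by (apply sqrt_sqrt; lra).
  assert (S5p : 0 <= sqrt 5) by apply sqrt_pos.
  assert (T1 : 1 < sqrt 5 < 3) by nra.
  assert (Ht' : tau' = 1 - tau) by (unfold tau, tau'; field).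
  assert (Ht : 1 < tau < 2) by (unfold tau; lra).
  rewrite Ht'. clear Ht' T1 S5 S5p. set (t := tau) in *. clearbody t.
  set (N0 := IZR z0) in *. set (N1 := IZR z1) in *. set (N2 := IZR z2) in *.
  set (N3 := IZR z3) in *. set (N4 := IZR z4) in *. set (N5 := IZR z5) in *.
  set (N6 := IZR z6) in *. set (N7 := IZR z7) in *. set (N8 := IZR z8) in *.
  set (N9 := IZR z9) in *. clearbody N0 N1 N2 N3 N4 N5 N6 N7 N8 N9.
  split.
  - rewrite <- Hre.
    assert (Ed : N0 * 1 - 0 * 0 + (N1 * (t / 2) - 0 * s5) + (N2 * ((t - 1) / 2) - 0 * (s5 * t)) +
        (N3 * ((1 - t) / 2) - 0 * (s5 * t)) + (N4 * (- t / 2) - 0 * s5) +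
        (N5 * -1 - 0 * 0) + (N6 * (- t / 2) - 0 * - s5) + (N7 * ((1 - t) / 2) - 0 * (- s5 * t)) +
        (N8 * ((t - 1) / 2) - 0 * (- s5 * t)) + (N9 * (t / 2) - 0 * - s5)
        - (N0 - N5 - N8 + N3 + (N9 - N4 + N8 - N3) * t)
        = t/2 * (N1 + N4 - N6 - N9) + (t-1)/2 * (N2+N3-N7-N8)) by field.
    rewrite HA, HB in Ed. lra.
  - assert (Ed : N0 - N5 - N8 + N3 + (N9 - N4 + N8 - N3) * (1 - t) =
       N0 - N5 + ((1-t)/2)*(N1-N4-N6+N9) + (-t/2)*(N2-N3-N7+N8)
       - (1-t)/2 * (N1 + N4 - N6 - N9) - (-t/2) * (N2+N3-N7-N8)) by field.
    rewrite HA, HB in Ed. rewrite Ed.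
    set (u := (1-t)/2) in *. set (v := -t/2) in *.
    assert (-1 < u < 0) by (unfold u; lra). assert (-1 < v < 0) by (unfold v; lra).
    clearbody u v. split; nra.
Qed.

Theorem lemma6p12 (n : nat) (hn : (1 <= n)%nat) :
  Rbar_le (min_dist (Sigma n)) (min_dist (Lset n)).
Proof.
  unfold min_dist.
  destruct (Glb_Rbar_correct (fun d => exists x y, Sigma n x /\ Sigma n y /\ x <> y /\ d = Rabs (x - y))) as [lbT _].
  destruct (Glb_Rbar_correct (fun d => exists x y, Lset n x /\ Lset n y /\ x <> y /\ d = Rabs (x - y))) as [_ glbS].
  apply glbS. intros d (x & y & Hx & Hy & Hxy & Hd).
  apply lbT. exists x, y. repeat split; auto; apply incl; auto.
Qed.
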